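(* Let $\mathcal H$ be a complex Hilbert space and $T\in\mathcal B(\mathcal H)$ left-invertible, with Cauchy dual $T'=T(T^*T)^{-1}$. The following are equivalent: (i) $\|T'T^*x\|\le\|T'Tx\|$ for all $x\in\mathcal H$; (ii) $T(T^*T)^{-1}T^*\le T^*(T^*T)^{-1}T$; (iii) $P_{\mathcal R(T)}\le T^*(T^*T)^{-1}T$; (iv) the restriction of $T'$ to its range $\mathcal R(T')$ is hyponormal. In particular, every concave operator is weakly concave.
   Context: $P_{\mathcal M}$ is the orthogonal projection onto a closed subspace $\mathcal M$; $\mathcal R(\cdot)$ is the range. An operator $A$ is hyponormal if $A^*A-AA^*\ge0$. $T$ is concave if $I-2T^*T+T^{*2}T^2\le0$. A left-invertible $T$ is weakly concave if $\sigma_{ap}(T)\subseteq\partial\mathbb D$ (approximate point spectrum in the unit circle), $\|x\|\le\|Tx\|$ for all $x$, and $\|T'T^*x\|\le\|T'Tx\|$ for all $x$. *)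

(* Defs.v *)
From HB Require Import structures.
From mathcomp Require Import all_boot all_order all_algebra.
From mathcomp Require Import reals.
From mathcomp Require Import complex.
From Stdlib Require Import ClassicalEpsilon.

Set Implicit Arguments. Unset Strict Implicit. Unset Printing Implicit Defensive.
Import Order.TTheory GRing.Theory Num.Theory.
Local Open Scope ring_scope.

Section Hilbert.
Variables (R : realType) (V : lmodType R[i]) (ip : V -> V -> R[i]).

Definition inner_product : Prop :=
  [/\ (forall (a : R[i]) (x y z : V), ip (a *: x + y) z = a * ip x z + ip y z),
      (forall x y : V, ip y x = (ip x y)^*),
      (forall x : V, 0 <= ip x x) &
      (forall x : V, ip x x = 0 -> x = 0)].

Definition hnorm (x : V) : R[i] := sqrtC (ip x x).

Definition complete : Prop :=
  forall u : nat -> V,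
    (forall e : R[i], 0 < e -> exists N : nat, forall m n : nat,
        (N <= m)%N -> (N <= n)%N -> hnorm (u m - u n) < e) ->
    exists l : V, forall e : R[i], 0 < e -> exists N : nat, forall n : nat,
        (N <= n)%N -> hnorm (u n - l) < e.

Definition hilbert : Prop := inner_product /\ complete.

Definition is_lin (A : V -> V) : Prop :=
  forall (a : R[i]) (x y : V), A (a *: x + y) = a *: A x + A y.

Definition bounded_op (A : V -> V) : Prop :=
  is_lin A /\ exists M : R[i], forall x : V, hnorm (A x) <= M * hnorm x.

(* Hilbert-space adjoint A^* (unique whenever it exists) *)
Definition adj (A : V -> V) : V -> V :=
  epsilon (inhabits id) (fun B : V -> V => forall x y : V, ip (A x) y = ip x (B y)).

Definition opinv (A : V -> V) : V -> V :=
  epsilon (inhabits id) (fun B : V -> V =>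
    bounded_op B /\ (forall x, B (A x) = x) /\ (forall x, A (B x) = x)).

Definition left_invertible (T : V -> V) : Prop :=
  exists L : V -> V, bounded_op L /\ forall x, L (T x) = x.

Definition cdual (T : V -> V) : V -> V := T \o opinv (adj T \o T).

Definition op_le (A B : V -> V) : Prop := forall x : V, ip (A x) x <= ip (B x) x.

Definition oprange (A : V -> V) : V -> Prop := fun y => exists x, y = A x.

Definition is_orth_proj (M : V -> Prop) (P : V -> V) : Prop :=
  [/\ is_lin P, (forall x, M (P x)), (forall x, M x -> P x = x) &
      (forall x y, M y -> ip (x - P x) y = 0)].

Definition orth_proj (M : V -> Prop) : V -> V :=
  epsilon (inhabits id) (is_orth_proj M).

(* the adjoint (in B(M)) of the restriction A|_M of an operator A with A M ⊆ M *)
Definition adj_on (M : V -> Prop) (A : V -> V) : V -> V :=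
  epsilon (inhabits id) (fun B : V -> V =>
    (forall x, M x -> M (B x)) /\
    (forall x y, M x -> M y -> ip (A x) y = ip x (B y))).

Definition hyponormal_on (M : V -> Prop) (A : V -> V) : Prop :=
  (forall x, M x -> M (A x)) /\
  forall x, M x ->
    0 <= ip (adj_on M A (A x) - A (adj_on M A x)) x.

Definition concave (T : V -> V) : Prop :=
  op_le (fun x => x - 2%:R *: adj T (T x) + adj T (adj T (T (T x)))) (fun _ => 0).

Definition ap_spec (T : V -> V) (l : R[i]) : Prop :=
  forall e : R[i], 0 < e -> exists x : V, hnorm x = 1 /\ hnorm (T x - l *: x) < e.

Definition weakly_concave (T : V -> V) : Prop :=
  [/\ left_invertible T,
      (forall l : R[i], ap_spec T l -> `|l| = 1),
      (forall x : V, hnorm x <= hnorm (T x)) &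
      (forall x : V, hnorm (cdual T (adj T x)) <= hnorm (cdual T (T x)))].

End Hilbert.

(* Main.v *)
Require Import Defs.
From HB Require Import structures.
From mathcomp Require Import all_boot all_order all_algebra.
From mathcomp Require Import reals complex ring lra.
From Stdlib Require Import ClassicalEpsilon.
Import Order.TTheory GRing.Theory Num.Theory.
Set Implicit Arguments. Unset Strict Implicit. Unset Printing Implicit Defensive.
Local Open Scope ring_scope.

Module A.

Section Cplx.
Variable R : realType.
Notation rc := (real_complex R).
Implicit Types a b z : R[i].
Definition re (z : R[i]) : R := complex.Re z.
Definition im (z : R[i]) : R := complex.Im z.
Lemma ReM a b : re (a * b) = re a * re b - im a * im b. Proof. by case: a => ? ?; case: b => ? ?. Qed.
Lemma ImM a b : im (a * b) = re a * im b + im a * re b. Proof. by case: a => ? ?; case: b => ? ?. Qed.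
Lemma ReD a b : re (a + b) = re a + re b. Proof. by case: a => ? ?; case: b => ? ?. Qed.
Lemma ImD a b : im (a + b) = im a + im b. Proof. by case: a => ? ?; case: b => ? ? . Qed.
Lemma ReN a : re (- a) = - re a. Proof. by case: a => ? ?. Qed.
Lemma ImN a : im (- a) = - im a. Proof. by case: a => ? ?. Qed.
Lemma ReJ a : re (a^*) = re a. Proof. by case: a => ? ?. Qed.
Lemma ImJ a : im (a^*) = - im a. Proof. by case: a => ? ?. Qed.
Lemma ReC (r : R) : re (rc r) = r. Proof. by []. Qed.
Lemma ImC (r : R) : im (rc r) = 0. Proof. by []. Qed.
Lemma cplx_eq a b : re a = re b -> im a = im b -> a = b. Proof. by case: a => ? ?; case: b => ? ? /= -> ->. Qed.
Lemma ReCM (r : R) a : re (rc r * a) = r * re a.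
Proof. by rewrite ReM ReC ImC mul0r subr0. Qed.
Lemma ImCM (r : R) a : im (rc r * a) = r * im a.
Proof. by rewrite ImM ReC ImC mul0r addr0. Qed.
Lemma conjC_rc (r : R) : (rc r)^* = rc r. Proof. by apply: cplx_eq; rewrite ?ReJ ?ImJ ?ImC ?oppr0. Qed.

Definition nc2 (z : R[i]) : R := re z ^+ 2 + im z ^+ 2.
Lemma nc2_ge0 z : 0 <= nc2 z. Proof. rewrite /nc2; nra. Qed.
Lemma nc2_eq0 z : nc2 z = 0 -> z = 0.
Proof.
rewrite /nc2 => h; apply: cplx_eq; rewrite ?ReC ?ImC /=.
  have : re z ^+ 2 = 0 by nra. by move/eqP; rewrite sqrf_eq0 => /eqP.
have : im z ^+ 2 = 0 by nra. by move/eqP; rewrite sqrf_eq0 => /eqP.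
Qed.
Lemma conjM_nc2 z : z^* * z = rc (nc2 z).
Proof. apply: cplx_eq; rewrite ?ReM ?ImM ?ReJ ?ImJ ?ReC ?ImC /nc2; ring. Qed.
Lemma nc2M a b : nc2 (a * b) = nc2 a * nc2 b.
Proof. rewrite /nc2 ReM ImM; ring. Qed.
Lemma nc2J a : nc2 a^* = nc2 a. Proof. rewrite /nc2 ReJ ImJ; ring. Qed.
Lemma nc2C (r : R) : nc2 (rc r) = r ^+ 2. Proof. rewrite /nc2 ReC ImC; ring. Qed.
Lemma ge0_rc z : 0 <= z -> z = rc (re z).
Proof. rewrite lecE /= => /andP[/eqP h _]; apply: cplx_eq => //; by rewrite ImC -h. Qed.
Lemma gt0_rc z : 0 < z -> z = rc (re z) /\ 0 < re z.
Proof. rewrite ltcE /= => /andP[/eqP h h2]; split => //; apply: cplx_eq => //; by rewrite ImC -h. Qed.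
Lemma leC a b : (a <= b) = (im b == im a) && (re a <= re b). Proof. exact: lecE. Qed.
Lemma lerc (r s : R) : (rc r <= rc s) = (r <= s). Proof. exact: lecR. Qed.
Lemma ltrc (r s : R) : (rc r < rc s) = (r < s). Proof. exact: ltcR. Qed.
Lemma sqrtC_rc (r : R) : 0 <= r -> sqrtC (rc r) = rc (Num.sqrt r).
Proof.
move=> r0; rewrite -{1}(sqr_sqrtr r0) rmorphXn sqrCK //.
by rewrite -(rmorph0 (real_complex R)) lerc sqrtr_ge0.
Qed.
Lemma sqrt_lt (a e : R) : 0 < e -> (Num.sqrt a < e) = (a < e ^+ 2).
Proof. move=> e0; have -> : (a < e ^+ 2) = (Num.sqrt a < Num.sqrt (e ^+ 2)) by rewrite ltr_sqrt // exprn_gt0. by rewrite sqrtr_sqr gtr0_norm. Qed.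
Lemma sqrt_le (a b : R) : 0 <= b -> (Num.sqrt a <= Num.sqrt b) = (a <= b).
Proof. move=> b0; by rewrite ler_sqrt. Qed.
Lemma le_of_eps (a b c : R) : 0 <= c ->
  (forall e, 0 < e -> e <= 1 -> a <= b + e * c) -> a <= b.
Proof.
move=> c0 H; case: (lerP a b) => // hlt; exfalso.
have D0 : 0 < a - b + c + 1 by lra.
pose e := (a - b) / (a - b + c + 1).
have he : e * (a - b + c + 1) = a - b by rewrite /e divfK // gt_eqF.
have e0 : 0 < e by rewrite /e divr_gt0 // subr_gt0.
have e1 : e <= 1 by nra.
have := H e e0 e1; nra.
Qed.
End Cplx.

End A.
Import A.

Module B.

Section IP.
Variables (R : realType) (V : lmodType R[i]) (ip : V -> V -> R[i]).
Hypothesis Hip : inner_product ip.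
Notation rc := (real_complex R).

Lemma ipDl x y z : ip (x + y) z = ip x z + ip y z.
Proof. case: Hip => lin _ _ _; by have := lin 1 x y z; rewrite scale1r mul1r. Qed.
Lemma ip0l z : ip 0 z = 0.
Proof. apply: (addrI (ip 0 z)); by rewrite addr0 -ipDl addr0. Qed.
Lemma ipZl a x z : ip (a *: x) z = a * ip x z.
Proof. case: Hip => lin _ _ _; by have := lin a x 0 z; rewrite addr0 ip0l addr0. Qed.
Lemma ipNl x z : ip (- x) z = - ip x z.
Proof. by rewrite -scaleN1r ipZl mulN1r. Qed.
Lemma ipBl x y z : ip (x - y) z = ip x z - ip y z.
Proof. by rewrite ipDl ipNl. Qed.
Lemma ipC x y : ip y x = (ip x y)^*.
Proof. by case: Hip. Qed.
Lemma ipDr x y z : ip x (y + z) = ip x y + ip x z.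
Proof. by rewrite ipC ipDl rmorphD /= -!ipC. Qed.
Lemma ipZr a x y : ip x (a *: y) = a^* * ip x y.
Proof. by rewrite ipC ipZl rmorphM /= -ipC. Qed.
Lemma ip0r x : ip x 0 = 0.
Proof. by rewrite ipC ip0l rmorph0. Qed.
Lemma ipNr x y : ip x (- y) = - ip x y.
Proof. by rewrite ipC ipNl rmorphN /= -ipC. Qed.
Lemma ipBr x y z : ip x (y - z) = ip x y - ip x z.
Proof. by rewrite ipDr ipNr. Qed.
Lemma ipxx_ge0 x : 0 <= ip x x. Proof. by case: Hip. Qed.
Lemma ipxx_eq0 x : ip x x = 0 -> x = 0. Proof. by case: Hip => _ _ _; apply. Qed.

Definition n2 x : R := re (ip x x).
Lemma ipxx x : ip x x = rc (n2 x). Proof. exact/ge0_rc/ipxx_ge0. Qed.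
Lemma n2_ge0 x : 0 <= n2 x.
Proof. by rewrite -lerc rmorph0 -ipxx ipxx_ge0. Qed.
Lemma n2_eq0 x : n2 x = 0 -> x = 0.
Proof. by move=> h; apply: ipxx_eq0; rewrite ipxx h rmorph0. Qed.
Lemma n20 : n2 0 = 0. Proof. by rewrite /n2 ip0l. Qed.
Lemma n2D x y : n2 (x + y) = n2 x + n2 y + 2 * re (ip x y).
Proof. rewrite /n2 ipDl !ipDr (ipC x y) !ReD ReJ; ring. Qed.
Lemma n2N x : n2 (- x) = n2 x.
Proof. by rewrite /n2 ipNl ipNr opprK. Qed.
Lemma n2B x y : n2 (x - y) = n2 x + n2 y - 2 * re (ip x y).
Proof. rewrite n2D n2N ipNr ReN; ring. Qed.
Lemma n2Z a x : n2 (a *: x) = nc2 a * n2 x.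
Proof. by rewrite /n2 ipZl ipZr mulrA [a * _]mulrC conjM_nc2 ipxx -rmorphM ReC. Qed.
Lemma n2Zr (s : R) x : n2 (rc s *: x) = s ^+ 2 * n2 x.
Proof. by rewrite n2Z nc2C. Qed.

Lemma n2_sub_scal z y w (s : R) :
  n2 (z - (rc s * w) *: y) = n2 z + s ^+ 2 * nc2 w * n2 y - 2 * s * re (w^* * ip z y).
Proof.
rewrite n2B n2Z nc2M nc2C ipZr rmorphM /= conjC_rc -(mulrA (rc s)) ReCM; ring.
Qed.

Lemma re_ip_le x y (s : R) : 0 < s -> 2 * re (ip x y) <= s * n2 x + s^-1 * n2 y.
Proof.
move=> s0; have := n2_ge0 (rc s *: x - y); rewrite n2B n2Zr ipZl ReCM => h.
have e : s * (s * n2 x + s^-1 * n2 y - 2 * re (ip x y)) = s ^+ 2 * n2 x + n2 y - 2 * (s * re (ip x y)).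
  by field; rewrite gt_eqF.
have : 0 <= s * (s * n2 x + s^-1 * n2 y - 2 * re (ip x y)) by rewrite e.
by rewrite pmulr_rge0 // subr_ge0.
Qed.

Lemma CS x y : nc2 (ip x y) <= n2 x * n2 y.
Proof.
have [y0|yn] := eqVneq (n2 y) 0.
  by rewrite (n2_eq0 y0) ip0r n20 mulr0 /nc2 /= expr0n /= addr0.
have n0 : 0 < n2 y by rewrite lt_def yn n2_ge0.
have := n2_ge0 (x - (rc (n2 y)^-1 * ip x y) *: y).
rewrite n2_sub_scal conjM_nc2 ReC.
have -> : n2 x + (n2 y)^-1 ^+ 2 * nc2 (ip x y) * n2 y - 2 * (n2 y)^-1 * nc2 (ip x y)
  = (n2 x * n2 y - nc2 (ip x y)) / n2 y by field.
by rewrite pmulr_lge0 ?invr_gt0 // subr_ge0.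
Qed.

Lemma ip_eq0 x : (forall y, ip x y = 0) -> x = 0.
Proof. by move=> h; apply: ipxx_eq0; rewrite h. Qed.
Lemma ip_injr a b : (forall x, ip x a = ip x b) -> a = b.
Proof.
move=> h; apply/eqP; rewrite -subr_eq0; apply/eqP/ipxx_eq0.
by rewrite ipBr h subrr.
Qed.
Lemma ip_injl a b : (forall x, ip a x = ip b x) -> a = b.
Proof. move=> h; apply: ip_injr => x; by rewrite ipC h -ipC. Qed.

Definition cauchy (u : nat -> V) := forall e : R, 0 < e -> exists N, forall m n,
  (N <= m)%N -> (N <= n)%N -> n2 (u m - u n) < e.
Definition conv (u : nat -> V) l := forall e : R, 0 < e -> exists N, forall n,
  (N <= n)%N -> n2 (u n - l) < e.

Lemma hnormE x : hnorm ip x = rc (Num.sqrt (n2 x)).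
Proof. by rewrite /hnorm ipxx sqrtC_rc // n2_ge0. Qed.

Lemma complete_n2 : complete ip -> forall u, cauchy u -> exists l, conv u l.
Proof.
move=> C u cu.
have [l hl] : exists l, forall e : R[i], 0 < e -> exists N, forall n,
    (N <= n)%N -> hnorm ip (u n - l) < e.
  apply: C => e /gt0_rc [-> e0].
  have [N HN] := cu _ (exprn_gt0 2 e0).
  exists N => m n hm hn; by rewrite hnormE ltrc sqrt_lt // HN.
exists l => e e0.
have se : 0 < rc (Num.sqrt e) by rewrite -(rmorph0 rc) ltrc sqrtr_gt0.
have [N HN] := hl _ se; exists N => n hn.
by have := HN n hn; rewrite hnormE ltrc ltr_sqrt.
Qed.

Definition subsp (M : V -> Prop) := M 0 /\ (forall a x y, M x -> M y -> M (a *: x + y)).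
Definition closedP (M : V -> Prop) := forall u l, (forall n, M (u n)) -> conv u l -> M l.

Lemma subspD M : subsp M -> forall x y, M x -> M y -> M (x + y).
Proof. case=> _ h x y mx my; by have := h 1 x y mx my; rewrite scale1r. Qed.
Lemma subspZ M : subsp M -> forall a x, M x -> M (a *: x).
Proof. case=> h0 h a x mx; by have := h a x 0 mx h0; rewrite addr0. Qed.
Lemma subspB M : subsp M -> forall x y, M x -> M y -> M (x - y).
Proof. move=> sM x y mx my; apply: subspD => //; rewrite -scaleN1r; exact: subspZ. Qed.

Lemma parallel a b : n2 (a - b) + n2 (a + b) = 2 * n2 a + 2 * n2 b.
Proof. rewrite n2B n2D; ring. Qed.

Lemma small_inv (e : R) : 0 < e -> exists N, forall n, (N <= n)%N -> (n.+1%:R : R)^-1 < e.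
Proof.
move=> e0; have h0 : (0:R) <= e^-1 by rewrite invr_ge0 ltW.
have h := archi_boundP h0.
exists (Num.Def.archi_bound e^-1) => n hn.
rewrite -(invrK e) ltf_pV2 ?posrE ?invr_gt0 ?ltr0Sn //.
apply: (lt_le_trans h); rewrite ler_nat; exact: leqW.
Qed.

Lemma proj_thm M : complete ip -> subsp M -> closedP M ->
  forall x, exists p, M p /\ forall y, M y -> ip (x - p) y = 0.
Proof.
move=> C sM cM x.
pose E := fun r : R => exists m, M m /\ r = n2 (x - m).
have neE : exists r, E r by exists (n2 (x - 0)); exists 0; split => //; case: sM.
have lbE : exists r, forall y, E y -> r <= y by exists 0 => _ [m [_ ->]]; exact: n2_ge0.
pose d := inf E.
have hd : forall m, M m -> d <= n2 (x - m).
  move=> m mm; apply: (ge_inf lbE); by exists m.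
have d0 : 0 <= d by apply: lb_le_inf => // _ [m [_ ->]]; exact: n2_ge0.
have ex : forall n : nat, exists m, M m /\ n2 (x - m) < d + (n.+1%:R)^-1.
  move=> n; have hd1 : d < d + (n.+1%:R)^-1 by rewrite ltrDl invr_gt0 ltr0Sn.
  have [_ [m [mm ->]] hlt] := inf_lt neE hd1.
  by exists m.
pose m := fun n => epsilon (inhabits 0) (fun m => M m /\ n2 (x - m) < d + (n.+1%:R)^-1).
have hm : forall n, M (m n) /\ n2 (x - m n) < d + (n.+1%:R)^-1.
  move=> n; exact: (epsilon_spec _ _ (ex n)).
have key : forall p q, n2 (m p - m q) <= 2 * (p.+1%:R)^-1 + 2 * (q.+1%:R)^-1.
  move=> p q.
  have mid : M (rc (2^-1) *: (m p + m q)).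
    by apply: subspZ => //; apply: subspD => //; [exact: (hm p).1 | exact: (hm q).1].
  have h1 := hd _ mid.
  have := parallel (x - m q) (x - m p).
  have -> : (x - m q) - (x - m p) = m p - m q by rewrite opprB addrC addrA subrK.
  have -> : (x - m q) + (x - m p) = rc 2 *: (x - rc (2^-1) *: (m p + m q)).
    rewrite scalerBr scalerA -rmorphM mulfV ?pnatr_eq0 // rmorph1 scale1r.
    rewrite rmorph_nat scaler_nat mulr2n addrACA -opprD [m q + _]addrC //.
  rewrite n2Zr (_ : (2:R) ^+ 2 = 4); last by rewrite expr2 -natrM.
  have := (hm p).2; have := (hm q).2; move: (p.+1%:R^-1) (q.+1%:R^-1) => P Q; lra.
have cu : cauchy m.
  move=> e e0.
  have e4 : 0 < e / 4 by rewrite divr_gt0.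
  have [N HN] := small_inv e4.
  exists N => p q hp hq; apply: (le_lt_trans (key p q)).
  have := HN p hp; have := HN q hq; move: (p.+1%:R^-1) (q.+1%:R^-1) => P Q; lra.
have [l hl] := complete_n2 C cu.
have Ml : M l by apply: (cM m l) => // n; exact: (hm n).1.
have dl : n2 (x - l) <= d.
  apply: (@le_of_eps _ _ _ (d + 4)); first lra.
  move=> e e0 e1.
  have [N1 HN1] := small_inv e0.
  have [N2 HN2] := hl _ (exprn_gt0 2 e0).
  pose n := maxn N1 N2.
  have A1 := (hm n).2.
  have A2 := HN1 n (leq_maxl _ _).
  have B1 := HN2 n (leq_maxr _ _).
  move: (n.+1%:R^-1) A1 A2 => P A1 A2.
  have hre := re_ip_le (x - m n) (m n - l) e0.
  have -> : x - l = (x - m n) + (m n - l) by rewrite addrA subrK.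
  rewrite n2D.
  have hB : e^-1 * n2 (m n - l) <= e.
    have : e^-1 * n2 (m n - l) <= e^-1 * e ^+ 2.
      by apply: ler_wpM2l; [rewrite invr_ge0 ltW | exact: ltW].
    by rewrite expr2 mulKf ?gt_eqF.
  have hA : e * n2 (x - m n) <= e * (d + e) by apply: ler_wpM2l; [exact: ltW | lra].
  have hee : e * e <= e by nra.
  nra.
exists l; split => // y My.
pose w := ip (x - l) y.
pose s := ((n2 y + 1)^-1 : R).
have n0 := n2_ge0 y.
have s0 : 0 < s by rewrite /s invr_gt0; lra.
have hs : s * (n2 y + 1) = 1 by rewrite /s mulVf // gt_eqF //; lra.
have Mt : M (l + (rc s * w) *: y) by apply: subspD => //; exact: subspZ.
have := hd _ Mt.
have -> : x - (l + (rc s * w) *: y) = (x - l) - (rc s * w) *: y by rewrite opprD addrA.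
rewrite n2_sub_scal conjM_nc2 ReC => h.
have W0 := nc2_ge0 w.
have h2 : 0 <= s * (s * nc2 w * n2 y - 2 * nc2 w).
  have -> : s * (s * nc2 w * n2 y - 2 * nc2 w) = s ^+ 2 * nc2 w * n2 y - 2 * s * nc2 w by ring.
  lra.
have h3 : 0 <= s * nc2 w * n2 y - 2 * nc2 w by rewrite -(pmulr_rge0 _ s0).
have h4 : s * n2 y = 1 - s by lra.
have h5 : s * nc2 w * n2 y = nc2 w * (1 - s) by rewrite -h4; ring.
have : nc2 w <= 0 by nra.
move=> hW; have : nc2 w = 0 by apply/eqP; rewrite eq_le hW W0.
exact: nc2_eq0.
Qed.

Lemma riesz : complete ip -> forall f : V -> R[i],
  (forall a x y, f (a *: x + y) = a * f x + f y) ->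
  (exists K : R, forall x, nc2 (f x) <= K * n2 x) ->
  exists z, forall x, f x = ip x z.
Proof.
move=> C f lin [K HK].
have f0 : f 0 = 0.
  have := lin 1 0 0; rewrite scale1r addr0 mul1r => h.
  apply: (addrI (f 0)); by rewrite addr0 -h.
have fB : forall x y, f (x - y) = f x - f y.
  move=> x y; by rewrite addrC -scaleN1r lin mulN1r addrC.
have fZ : forall a x, f (a *: x) = a * f x.
  by move=> a x; have := lin a x 0; rewrite addr0 f0 addr0.
pose M := fun x => f x = 0.
have sM : subsp M.
  split; first exact: f0.
  by move=> a x y; rewrite /M lin => -> ->; rewrite mulr0 addr0.
have cM : closedP M.
  move=> u l Mu hl; rewrite /M.
  have h : nc2 (f l) <= 0.
    apply: (@le_of_eps _ _ _ `|K|); first exact: normr_ge0.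
    move=> e e0 _.
    have [N HN] := hl e e0.
    have := HK (l - u N); rewrite fB Mu subr0 -opprB n2N => h.
    have := HN N (leqnn N) => h2.
    have := n2_ge0 (u N - l) => h3.
    have hK : K <= `|K| := ler_norm K.
    have hK0 : 0 <= `|K| := normr_ge0 K.
    have p1 : K * n2 (u N - l) <= `|K| * n2 (u N - l) by apply: ler_wpM2r.
    have p2 : `|K| * n2 (u N - l) <= `|K| * e by apply: ler_wpM2l => //; exact: ltW.
    rewrite add0r mulrC; lra.
  apply: nc2_eq0; apply/eqP; by rewrite eq_le h nc2_ge0.
case: (classic (exists x0, f x0 != 0)) => [[x0 fx0]|nof]; last first.
  exists 0 => x; rewrite ip0r.
  case: (eqVneq (f x) 0) => // h; exfalso; apply: nof; by exists x.
have [p [Mp orth]] := proj_thm C sM cM x0.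
pose w := x0 - p.
have fw : f w = f x0 by rewrite /w fB Mp subr0.
have fw0 : f w != 0 by rewrite fw.
have ww0 : ip w w != 0.
  apply/eqP => /ipxx_eq0 w0; move: fw0; by rewrite w0 f0 eqxx.
exists ((f w / ip w w)^* *: w) => x.
have Mv : M (x - (f x / f w) *: w).
  by rewrite /M fB fZ divfK // subrr.
have := orth _ Mv; rewrite -/w ipBr ipZr => h.
rewrite ipZr conjCK.
have h' : ip w x = (f x / f w)^* * ip w w by apply/eqP; rewrite -subr_eq0 h.
have : ip x w = (f x / f w) * ip w w.
  by rewrite ipC h' rmorphM /= conjCK -ipC.
move=> ->; field; by apply/andP.
Qed.
End IP.

Lemma complete_of_n2 (R : realType) (V : lmodType R[i]) (ip : V -> V -> R[i]) :
  inner_product ip ->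
  (forall u, cauchy ip u -> exists l, conv ip u l) -> complete ip.
Proof.
move=> Hip H u cu.
have cu' : cauchy ip u.
  move=> e e0.
  have se : 0 < real_complex R (Num.sqrt e) by rewrite -(rmorph0 (real_complex R)) ltrc sqrtr_gt0.
  have [N HN] := cu _ se; exists N => m n hm hn.
  by have := HN m n hm hn; rewrite hnormE // ltrc ltr_sqrt.
have [l hl] := H u cu'; exists l => e /gt0_rc [-> e0].
have [N HN] := hl _ (exprn_gt0 2 e0).
exists N => n hn; by rewrite hnormE // ltrc sqrt_lt // HN.
Qed.

End B.
Import B.

Module D.

Section Lin.
Variables (R : realType) (V : lmodType R[i]) (A : V -> V).
Hypothesis lA : is_lin A.
Lemma lin0 : A 0 = 0.
Proof. have := lA 1 0 0; rewrite scale1r addr0 scale1r => h; apply: (addrI (A 0)); by rewrite addr0 -h. Qed.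
Lemma linZ a x : A (a *: x) = a *: A x.
Proof. by have := lA a x 0; rewrite addr0 lin0 addr0. Qed.
Lemma linD x y : A (x + y) = A x + A y.
Proof. by have := lA 1 x y; rewrite !scale1r. Qed.
Lemma linN x : A (- x) = - A x.
Proof. by rewrite -scaleN1r linZ scaleN1r. Qed.
Lemma linB x y : A (x - y) = A x - A y.
Proof. by rewrite linD linN. Qed.
End Lin.

Lemma lin_comp (R : realType) (V : lmodType R[i]) (A B : V -> V) :
  is_lin A -> is_lin B -> is_lin (A \o B).
Proof. by move=> lA lB a x y /=; rewrite lB lA. Qed.

Section Ops.
Variables (R : realType) (V : lmodType R[i]) (ip : V -> V -> R[i]).
Hypothesis Hip : inner_product ip.
Hypothesis Hc : complete ip.
Notation rc := (real_complex R).
Notation n2 := (n2 ip).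

Lemma bounded_n2 A : bounded_op ip A -> exists K, 0 <= K /\ forall x, n2 (A x) <= K * n2 x.
Proof.
case=> _ [M HM]; exists (nc2 M); split; first exact: nc2_ge0.
move=> x; have := HM x; rewrite !hnormE // leC => /andP[_].
rewrite mulrC ReCM ReC => h.
have h1 := sqrtr_ge0 (n2 (A x)); have h2 := sqrtr_ge0 (n2 x).
have e1 := sqr_sqrtr (n2_ge0 Hip (A x)); have e2 := sqr_sqrtr (n2_ge0 Hip x).
rewrite -e1 -e2 /nc2; nra.
Qed.

Lemma bounded_of_n2 A : is_lin A -> (exists K, 0 <= K /\ forall x, n2 (A x) <= K * n2 x) ->
  bounded_op ip A.
Proof.
move=> lA [K [K0 HK]]; split => //; exists (rc (Num.sqrt K)) => x.
rewrite !hnormE // -rmorphM lerc -sqrtrM //; apply: ler_wsqrtr; exact: HK.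
Qed.

Lemma hnorm_le x y : (hnorm ip x <= hnorm ip y) <-> n2 x <= n2 y.
Proof. by rewrite !hnormE // lerc ler_sqrt // n2_ge0. Qed.

Lemma bounded_comp A B : bounded_op ip A -> bounded_op ip B -> bounded_op ip (A \o B).
Proof.
move=> bA bB; have [KA [KA0 HA]] := bounded_n2 bA; have [KB [KB0 HB]] := bounded_n2 bB.
apply: bounded_of_n2; first exact: lin_comp bA.1 bB.1.
exists (KA * KB); split; first exact: mulr_ge0.
move=> x /=; apply: (le_trans (HA _)); rewrite -mulrA; apply: ler_wpM2l => //; exact: HB.
Qed.

Lemma adj_ex T : bounded_op ip T -> exists B : V -> V, forall x y, ip (T x) y = ip x (B y).
Proof.
move=> bT; have [K [K0 HK]] := bounded_n2 bT.
have ex : forall y, exists z, forall x, ip (T x) y = ip x z.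
  move=> y; apply: (riesz Hip Hc (f := fun x => ip (T x) y)).
    by move=> a x x'; rewrite bT.1 (ipDl Hip) (ipZl Hip).
  exists (K * n2 y) => x; apply: (le_trans (CS Hip _ _)).
  rewrite mulrAC; apply: ler_wpM2r; [exact: n2_ge0 | exact: HK].
exists (fun y => epsilon (inhabits 0) (fun z => forall x, ip (T x) y = ip x z)).
move=> x y; exact: (epsilon_spec _ _ (ex y)).
Qed.

Section Adj.
Variable T : V -> V.
Hypothesis bT : bounded_op ip T.
Local Notation S := (adj ip T).
Lemma adjP x y : ip (T x) y = ip x (S y).
Proof.
rewrite /adj; have := adj_ex bT => ex.
exact: (epsilon_spec _ (fun B : V -> V => forall x y, ip (T x) y = ip x (B y)) ex).
Qed.
Lemma adjP' x y : ip (S y) x = ip y (T x).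
Proof. by rewrite (ipC Hip) -adjP -(ipC Hip). Qed.
Lemma adj_lin : is_lin S.
Proof.
move=> a x y; apply: (ip_injr Hip) => z.
by rewrite -adjP (ipDr Hip) (ipZr Hip) (ipDr Hip) (ipZr Hip) !adjP.
Qed.
Lemma adj_bounded : bounded_op ip S.
Proof.
apply: bounded_of_n2; first exact: adj_lin.
have [K [K0 HK]] := bounded_n2 bT; exists K; split => // y.
have h := CS Hip (T (S y)) y.
rewrite adjP (ipxx Hip) nc2C in h.
have h2 : n2 (T (S y)) * n2 y <= K * n2 (S y) * n2 y.
  apply: ler_wpM2r; [exact: n2_ge0 | exact: HK].
have a0 := n2_ge0 Hip (S y); have b0 := n2_ge0 Hip y.
have [e0|ne0] := eqVneq (n2 (S y)) 0; first by rewrite e0 mulr_ge0.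
have ap : 0 < n2 (S y) by rewrite lt_def ne0 a0.
rewrite -(ler_pM2l ap); nra.
Qed.
End Adj.

Lemma inv_ex T : bounded_op ip T -> (exists c, 0 < c /\ forall x, n2 x <= c * n2 (T x)) ->
  exists Q, bounded_op ip Q /\ (forall x, Q (adj ip T (T x)) = x) /\ (forall x, adj ip T (T (Q x)) = x).
Proof.
move=> bT [c [c0 Hc']]; have [K [K0 HK]] := bounded_n2 bT.
have lT := bT.1; have lS := adj_lin bT.
pose ip' := fun x y => ip (T x) (T y).
have Hip' : inner_product ip'.
  split.
  - by move=> a x y z; rewrite /ip' lT (ipDl Hip) (ipZl Hip).
  - by move=> x y; rewrite /ip' (ipC Hip).
  - by move=> x; exact: (ipxx_ge0 Hip).
  - move=> x /(ipxx_eq0 Hip) Tx0; apply: (n2_eq0 Hip).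
    apply/eqP; rewrite eq_le n2_ge0 // andbT; have := Hc' x; by rewrite Tx0 (n20 Hip) mulr0.
have n2' : forall x, B.n2 ip' x = n2 (T x) by [].
have Hc2 : complete ip'.
  apply: complete_of_n2 => // u cu.
  have cu1 : cauchy ip u.
    move=> e e0; have [N HN] := cu (e / c) (divr_gt0 e0 c0).
    exists N => m n hm hn; apply: (le_lt_trans (Hc' _)).
    by rewrite -ltr_pdivlMl // mulrC -n2'; exact: HN.
  have [l hl] := complete_n2 Hip Hc cu1; exists l => e e0.
  have [N HN] := hl (e / (K + 1)) (divr_gt0 e0 (ltr_wpDl K0 ltr01)).
  exists N => n hn; rewrite n2'; apply: (le_lt_trans (HK _)).
  have := HN n hn; rewrite ltr_pdivlMr ?(ltr_wpDl K0 ltr01) // => h.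
  have := n2_ge0 Hip (u n - l); nra.
have surj : forall y, exists z, adj ip T (T z) = y.
  move=> y.
  have bd : exists K0, forall x, nc2 (ip x y) <= K0 * B.n2 ip' x.
    exists (c * n2 y) => x; apply: (le_trans (CS Hip _ _)).
    rewrite mulrAC; apply: ler_wpM2r; [exact: n2_ge0 | rewrite n2'; exact: Hc'].
  have [z Hz] := riesz Hip' Hc2 (f := fun x => ip x y)
    (fun a x x' => etrans (ipDl Hip _ _ _) (congr1 (fun t => t + _) (ipZl Hip _ _ _))) bd.
  exists z; apply: (ip_injr Hip) => x; by rewrite Hz /ip' (adjP bT).
have inj : forall x x', adj ip T (T x) = adj ip T (T x') -> x = x'.
  move=> x x' h; apply/eqP; rewrite -subr_eq0; apply/eqP.
  have h0 : adj ip T (T (x - x')) = 0 by rewrite !linB // h subrr.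
  apply: (n2_eq0 Hip); apply/eqP; rewrite eq_le n2_ge0 // andbT.
  apply: (le_trans (Hc' _)); rewrite /B.n2 (adjP bT) h0 (ip0r Hip) /= mulr0.
  exact: lexx.
pose Q := fun y => epsilon (inhabits 0) (fun z => adj ip T (T z) = y).
have DQ : forall y, adj ip T (T (Q y)) = y by move=> y; exact: (epsilon_spec _ _ (surj y)).
have QD : forall x, Q (adj ip T (T x)) = x by move=> x; apply: inj; rewrite DQ.
have lQ : is_lin Q.
  move=> a x y; apply: inj; by rewrite DQ lT lS !DQ.
exists Q; split => //; apply: bounded_of_n2 => //.
exists (c ^+ 2); split; first by rewrite exprn_ge0 // ltW.
move=> y.
have h1 := Hc' (Q y).
have h2 : n2 (T (Q y)) = re (ip (Q y) y) by rewrite /B.n2 (adjP bT) DQ.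
have ci : 0 < c^-1 by rewrite invr_gt0.
have h3 := re_ip_le Hip (Q y) y ci.
rewrite invrK in h3.
have h4 : c * c^-1 = 1 by rewrite mulfV // gt_eqF.
have := n2_ge0 Hip (Q y); have := n2_ge0 Hip y; nra.
Qed.

Lemma opinvP T : bounded_op ip T -> (exists c, 0 < c /\ forall x, n2 x <= c * n2 (T x)) ->
  let Q := opinv ip (adj ip T \o T) in
  [/\ bounded_op ip Q, (forall x, Q (adj ip T (T x)) = x) & (forall x, adj ip T (T (Q x)) = x)].
Proof.
move=> bT hc Q; have [Q0 [b0 [h1 h2]]] := inv_ex bT hc.
have := epsilon_spec (inhabits id) (fun B : V -> V => bounded_op ip B /\
    (forall x, B ((adj ip T \o T) x) = x) /\ (forall x, (adj ip T \o T) (B x) = x)).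
case.
  by exists Q0; split.
by move=> b [c1 c2]; split.
Qed.

End Ops.

End D.
Import D.

Module E.

Section P1.
Variables (R : realType) (V : lmodType R[i]) (ip : V -> V -> R[i]).
Hypothesis Hip : inner_product ip.
Hypothesis Hc : complete ip.
Variable T : V -> V.
Hypothesis bT : bounded_op ip T.
Hypothesis hLI : left_invertible ip T.
Notation rc := (real_complex R).
Notation n2 := (n2 ip).
Notation S := (adj ip T).
Notation Q := (opinv ip (adj ip T \o T)).

Lemma below : exists c, 0 < c /\ forall x, n2 x <= c * n2 (T x).
Proof.
case: hLI => L [bL LT]; have [K [K0 HK]] := bounded_n2 Hip bL.
exists (K + 1); split; first lra.
move=> x; have := HK (T x); rewrite LT => h.
have := n2_ge0 Hip (T x); nra.
Qed.

Let opQ := opinvP Hip Hc bT below.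
Lemma QD x : Q (S (T x)) = x. Proof. by case: opQ. Qed.
Lemma DQ x : S (T (Q x)) = x. Proof. by case: opQ. Qed.
Lemma bQ : bounded_op ip Q. Proof. by case: opQ. Qed.
Let lQ := bQ.1.
Let lT := bT.1.
Let lS := adj_lin Hip Hc bT.
Let aP := adjP Hip Hc bT.
Let aP' := adjP' Hip Hc bT.

Lemma Qsa x y : ip (Q x) y = ip x (Q y).
Proof. by rewrite -{1}(DQ y) -aP -aP' DQ. Qed.
Lemma qdef w : ip (Q w) w = rc (n2 (T (Q w))).
Proof. by rewrite -{2}(DQ w) -aP (ipxx Hip). Qed.
Lemma Psa a b : ip a (T (Q (S b))) = ip (T (Q (S a))) b.
Proof. by rewrite -aP' -Qsa aP. Qed.

Lemma subsp_range : subsp (oprange T).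
Proof.
split; first by exists 0; rewrite (lin0 lT).
by move=> a _ _ [u ->] [v ->]; exists (a *: u + v); rewrite lT.
Qed.

Lemma orth_uniq M P1 P2 : subsp M -> is_orth_proj ip M P1 -> is_orth_proj ip M P2 ->
  forall x, P1 x = P2 x.
Proof.
move=> sM [l1 r1 f1 o1] [l2 r2 f2 o2] x.
have Md : M (P1 x - P2 x) by apply: subspB.
have h1 := o1 x _ Md; have h2 := o2 x _ Md.
apply/eqP; rewrite -subr_eq0; apply/eqP/(ipxx_eq0 Hip).
have e : P1 x - P2 x = (x - P2 x) - (x - P1 x) by rewrite [in RHS]opprB [in RHS]addrC [in RHS]addrA subrK.
by rewrite {1}e (ipBl Hip) h1 h2 subrr.
Qed.

Lemma Pdef x : orth_proj ip (oprange T) x = T (Q (S x)).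
Proof.
have hP : is_orth_proj ip (oprange T) (fun x => T (Q (S x))).
  split.
  - by apply: lin_comp => //; apply: lin_comp.
  - by move=> y; exists (Q (S y)).
  - by move=> _ [y ->]; rewrite QD.
  - move=> y _ [v ->]; by rewrite -aP' (linB lS) DQ subrr (ip0l Hip).
have := epsilon_spec (inhabits id) (is_orth_proj ip (oprange T)) (ex_intro _ _ hP).
move=> h; exact: (orth_uniq subsp_range h hP).
Qed.

Definition Zc := forall y, n2 (T (Q (S y))) <= n2 (T (Q (T y))).

Lemma c1Z : (forall x, hnorm ip (cdual ip T (S x)) <= hnorm ip (cdual ip T (T x))) <-> Zc.
Proof. split => h x; [exact/(hnorm_le Hip)/h | exact/(hnorm_le Hip)/h]. Qed.

Lemma c2Z : op_le ip (T \o Q \o S) (S \o Q \o T) <-> Zc.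
Proof.
have e : forall x, (ip ((T \o Q \o S) x) x <= ip ((S \o Q \o T) x) x) =
    (n2 (T (Q (S x))) <= n2 (T (Q (T x)))).
  by move=> x; rewrite /= aP aP' !qdef lerc.
by split => h x; have := h x; rewrite e.
Qed.

Lemma c3Z : op_le ip (orth_proj ip (oprange T)) (S \o Q \o T) <-> Zc.
Proof.
rewrite -c2Z; split => h x; have := h x; by rewrite /= Pdef.
Qed.

Lemma c4Z : hyponormal_on ip (oprange (cdual ip T)) (cdual ip T) <-> Zc.
Proof.
set M := oprange (cdual ip T).
have ME : forall y, M y <-> exists x, y = T x.
  move=> y; split; first by case=> x ->; exists (Q x).
  by case=> x ->; exists (S (T x)); rewrite /cdual /= QD.
have sM : subsp M.
  split; first by exists 0; rewrite /cdual /= (lin0 lQ) (lin0 lT).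
  by move=> a _ _ [u ->] [v ->]; exists (a *: u + v); rewrite /cdual /= lQ lT.
pose B0 := fun x => T (Q (S (Q (S x)))).
have PM : forall x, M x -> T (Q (S x)) = x.
  by move=> x /ME [y ->]; rewrite QD.
have specB0 : (forall x, M x -> M (B0 x)) /\
    (forall x y, M x -> M y -> ip (cdual ip T x) y = ip x (B0 y)).
  split; first by move=> x _; exists (S (Q (S x))).
  move=> x y Mx My; rewrite /cdual /= /B0 aP Qsa Psa PM //.
have := epsilon_spec (inhabits id) (fun B : V -> V =>
    (forall x, M x -> M (B x)) /\
    (forall x y, M x -> M y -> ip (cdual ip T x) y = ip x (B y))) (ex_intro _ _ specB0).
rewrite -/(adj_on ip M (cdual ip T)); set Bs := adj_on ip M (cdual ip T).
case=> BsM BsP.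
have Beq : forall x, M x -> Bs x = B0 x.
  move=> x Mx.
  have Md : M (Bs x - B0 x) by apply: subspB => //; [exact: BsM | exact: specB0.1].
  apply/eqP; rewrite -subr_eq0; apply/eqP/(ipxx_eq0 Hip).
  by rewrite (ipBr Hip) -BsP // -specB0.2 // subrr.
have TM : forall x, M (cdual ip T x) by move=> x; exists x.
have val : forall x, M x -> ip (Bs (cdual ip T x) - cdual ip T (Bs x)) x =
    rc (n2 (cdual ip T x) - n2 (Bs x)).
  move=> x Mx; rewrite (ipBl Hip).
  rewrite (BsP _ _ (BsM x Mx) Mx) (ipxx Hip).
  rewrite (ipC Hip) -(BsP _ _ Mx (TM x)) (ipxx Hip) conjC_rc rmorphB //.
have key : forall y, n2 (Bs (T y)) = n2 (T (Q (S y))).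
  move=> y; rewrite Beq ?ME; last by exists y.
  by rewrite /B0 QD.
split.
  case=> _ h y.
  have My : M (T y) by apply/ME; exists y.
  have := h _ My; rewrite val // -(rmorph0 rc) lerc subr_ge0 key.
  by rewrite /cdual /=.
move=> hZ; split; first by move=> x _; exact: TM.
move=> x /ME [y ->]; rewrite val; last by apply/ME; exists y.
rewrite -(rmorph0 rc) lerc subr_ge0 key /cdual /=; exact: hZ.
Qed.

Lemma part1 :
  let c1 := forall x : V, hnorm ip (cdual ip T (S x)) <= hnorm ip (cdual ip T (T x)) in
  let c2 := op_le ip (T \o Q \o S) (S \o Q \o T) in
  let c3 := op_le ip (orth_proj ip (oprange T)) (S \o Q \o T) in
  let c4 := hyponormal_on ip (oprange (cdual ip T)) (cdual ip T) in
  [/\ c1 <-> c2, c2 <-> c3 & c3 <-> c4].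
Proof.
move=> c1 c2 c3 c4.
have h1 := c1Z; have h2 := c2Z; have h3 := c3Z; have h4 := c4Z.
rewrite /c1 /c2 /c3 /c4; split; tauto.
Qed.

Lemma q_lower w u : 2 * re (ip u w) - n2 (T u) <= n2 (T (Q w)).
Proof.
have := n2_ge0 Hip (T u - T (Q w)); rewrite (n2B Hip) aP DQ; lra.
Qed.
Lemma P_le y : n2 (T (Q (S y))) <= n2 y.
Proof.
have e : ip (T (Q (S y))) (y - T (Q (S y))) = 0.
  by rewrite (ipBr Hip) Psa QD subrr.
have := n2_ge0 Hip (y - T (Q (S y))).
have := (n2D Hip (T (Q (S y))) (y - T (Q (S y)))); rewrite e addrC subrK.
rewrite /re /= mulr0 addr0; lra.
Qed.
End P1.

End E.
Import E.

Module F.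

Lemma bernoulli (R : realType) (h : R) (k : nat) : 0 <= h -> 1 + k%:R * h <= (1 + h) ^+ k.
Proof.
move=> h0; elim: k => [|k IH]; first by rewrite mul0r addr0 expr0.
rewrite exprS -natr1.
have : 0 <= k%:R * h by rewrite mulr_ge0 // ler0n.
nra.
Qed.

Lemma nc2X (R : realType) (l : R[i]) k : nc2 (l ^+ k) = nc2 l ^+ k.
Proof.
elim: k => [|k IH]; first by rewrite !expr0 /nc2 /= expr0n /= addr0 expr1n.
by rewrite !exprS nc2M IH.
Qed.

Section P2.
Variables (R : realType) (V : lmodType R[i]) (ip : V -> V -> R[i]).
Hypothesis Hip : inner_product ip.
Hypothesis Hc : complete ip.
Variable T : V -> V.
Hypothesis bT : bounded_op ip T.
Hypothesis hconc : concave ip T.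
Notation rc := (real_complex R).
Notation n2 := (n2 ip).
Notation S := (adj ip T).
Let lT := bT.1.
Let aP := adjP Hip Hc bT.
Let aP' := adjP' Hip Hc bT.

Lemma conc_ineq x : n2 x + n2 (T (T x)) <= 2 * n2 (T x).
Proof.
have := hconc x.
rewrite (ipDl Hip) (ipBl Hip) (ipZl Hip) aP' aP' aP' (ip0l Hip) !(ipxx Hip).
rewrite -(rmorph_nat rc) -rmorphM -rmorphB -rmorphD -(rmorph0 rc) lerc; lra.
Qed.

Lemma n2D_le a b : n2 (a + b) <= 2 * n2 a + 2 * n2 b.
Proof. have := parallel Hip a b; have := n2_ge0 Hip (a - b); lra. Qed.
Lemma n2B_le a b : n2 (a - b) <= 2 * n2 a + 2 * n2 b.
Proof. by have := n2D_le a (- b); rewrite (n2N Hip). Qed.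

Lemma seq_bound x k :
  n2 (iter k T x) <= n2 x + k%:R * (n2 (T x) - n2 x).
Proof.
pose a := fun k => n2 (iter k T x).
have hb : forall k, a k.+1 - a k <= a 1 - a 0.
  elim=> [|j IH]; first exact: lexx.
  have := conc_ineq (iter j T x); rewrite /a /= in IH *; lra.
elim: k => [|k IH]; first by rewrite mul0r addr0.
have := hb k; rewrite /a /= in IH *; rewrite -natr1; lra.
Qed.

Lemma expansive x : n2 x <= n2 (T x).
Proof.
case: (lerP (n2 x) (n2 (T x))) => // hlt; exfalso.
pose d := n2 x - n2 (T x).
have d0 : 0 < d by rewrite /d subr_gt0.
have h0 : 0 <= n2 x / d by rewrite divr_ge0 ?n2_ge0 // ltW.
have hk := archi_boundP h0.
set k := Num.Def.archi_bound _ in hk.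
have := seq_bound x k; have := n2_ge0 Hip (iter k T x).
rewrite ltr_pdivrMr // in hk.
rewrite /d in hk; lra.
Qed.

Lemma below1 : exists c, 0 < c /\ forall x, n2 x <= c * n2 (T x).
Proof. exists 1; split => // x; rewrite mul1r; exact: expansive. Qed.

Lemma li : left_invertible ip T.
Proof.
have [bQ QD _] := opinvP Hip Hc bT below1.
exists (opinv ip (adj ip T \o T) \o S); split.
  apply: (bounded_comp Hip); [exact: bQ | exact: (adj_bounded Hip Hc bT)].
by move=> x /=; rewrite QD.
Qed.

Lemma ap_n2 l : ap_spec ip T l -> forall e, 0 < e -> exists x, n2 x = 1 /\ n2 (T x - l *: x) < e.
Proof.
move=> hl e e0.
have se : 0 < rc (Num.sqrt e) by rewrite -(rmorph0 rc) ltrc sqrtr_gt0.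
have [x [h1 h2]] := hl _ se; exists x; split.
  move: h1; rewrite hnormE // -(rmorph1 rc) => /complexI h1.
  by rewrite -(sqr_sqrtr (n2_ge0 Hip x)) h1 expr1n.
by move: h2; rewrite hnormE // ltrc ltr_sqrt.
Qed.

Lemma ap_ge1 l : ap_spec ip T l -> 1 <= nc2 l.
Proof.
move=> hl; have L0 := nc2_ge0 l.
apply: (@le_of_eps _ _ _ (nc2 l + 2)); first lra.
move=> e e0 e1.
have [x [x1 hx]] := ap_n2 hl (exprn_gt0 2 e0).
have e2 : T x = l *: x + (T x - l *: x) by rewrite addrC subrK.
have h := expansive x; rewrite x1 e2 (n2D Hip) (n2Z Hip) x1 mulr1 in h.
have hre := re_ip_le Hip (l *: x) (T x - l *: x) e0.
rewrite (n2Z Hip) x1 mulr1 in hre.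
have hB : e^-1 * n2 (T x - l *: x) <= e.
  have : e^-1 * n2 (T x - l *: x) <= e^-1 * e ^+ 2.
    by apply: ler_wpM2l; [rewrite invr_ge0 ltW | exact: ltW].
  by rewrite expr2 mulKf ?gt_eqF.
have hee : e ^+ 2 <= e by rewrite expr2; nra.
have := n2_ge0 Hip (T x - l *: x).
nra.
Qed.

Lemma ap_le1 l : ap_spec ip T l -> nc2 l <= 1.
Proof.
move=> hl; have [K [K0 HK]] := bounded_n2 Hip bT.
set L2 := nc2 l; have L0 : 0 <= L2 := nc2_ge0 l.
have main : forall k : nat, L2 ^+ k <= 2 * (1 + k%:R * K).
  move=> k.
  pose D := fix D j := if j is j'.+1 then 2 * K * D j' + 2 * L2 ^+ j' else 0.
  have D0 : forall j, 0 <= D j.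
    elim=> [|j IH] /=; first exact: lexx.
    by rewrite addr_ge0 // ?mulr_ge0 // ?exprn_ge0.
  apply: (@le_of_eps _ _ _ (2 * D k)); first by rewrite mulr_ge0.
  move=> e e0 _.
  have [x [x1 hx]] := ap_n2 hl e0.
  pose d := fun j => iter j T x - l ^+ j *: x.
  have hd : forall j, n2 (d j) <= D j * e.
    elim=> [|j IH].
      by rewrite /d /= expr0 scale1r subrr (n20 Hip) mul0r.
    have -> : d j.+1 = T (d j) + l ^+ j *: (T x - l *: x).
      rewrite /d /= (linB lT) (linZ lT) scalerBr scalerA -exprSr.
      by rewrite addrA subrK.
    apply: (le_trans (n2D_le _ _)).
    rewrite (n2Z Hip) nc2X -/L2 /=.
    have h1 := HK (d j).
    have h2 : K * n2 (d j) <= K * (D j * e) by apply: ler_wpM2l.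
    have h3 : L2 ^+ j * n2 (T x - l *: x) <= L2 ^+ j * e.
      by apply: ler_wpM2l; [exact: exprn_ge0 | exact: ltW].
    nra.
  have e1 : l ^+ k *: x = iter k T x - d k by rewrite /d opprB addrC subrK.
  have := n2B_le (iter k T x) (d k); rewrite -e1 (n2Z Hip) nc2X x1 mulr1 -/L2.
  have := seq_bound x k; rewrite x1.
  have := HK x; rewrite x1 mulr1 => h1.
  have h2 : k%:R * (n2 (T x) - 1) <= k%:R * K by apply: ler_wpM2l; [exact: ler0n | lra].
  have := hd k; nra.
case: (lerP L2 1) => // hlt; exfalso.
pose h := L2 - 1.
have h0 : 0 < h by rewrite /h subr_gt0.
have hh : 0 <= (2 + 4 * K) / h ^+ 2 by rewrite divr_ge0 // ?exprn_ge0 ?ltW //; lra.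
have hb := archi_boundP hh.
set m0 := Num.Def.archi_bound _ in hb.
pose m := m0.+1.
have hm : (2 + 4 * K) < m%:R * h ^+ 2.
  rewrite ltr_pdivrMr ?exprn_gt0 // in hb.
  apply: (lt_le_trans hb); apply: ler_wpM2r; first exact: exprn_ge0 (ltW h0).
  by rewrite ler_nat.
have m1 : 1 <= m%:R :> R by rewrite ler1n.
have := main (m + m)%N; rewrite exprD natrD.
have hB := bernoulli m (ltW h0).
have eh : 1 + h = L2 by rewrite /h; lra.
rewrite eh in hB.
have hmh : 0 <= m%:R * h by rewrite mulr_ge0 // ?ler0n // ltW.
have := exprn_ge0 m L0.
nra.
Qed.

Lemma part2 : weakly_concave ip T.
Proof.
split.
- exact: li.
- move=> l hl; have e : nc2 l = 1 by apply/eqP; rewrite eq_le ap_le1 // ap_ge1.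
  apply/eqP; rewrite -sqrp_eq1 // normCK mulrC conjM_nc2 e //.
- by move=> x; apply/(hnorm_le Hip); exact: expansive.
- apply/(c1Z Hip) => y.
  apply: (le_trans (P_le Hip Hc bT li y)).
  have := q_lower Hip Hc bT li (T y) (T y).
  rewrite -/(B.n2 ip (T y)).
  have := conc_ineq y; lra.
Qed.
End P2.

End F.
Import F.

Theorem proposition2p3 (R : realType) (V : lmodType R[i]) (ip : V -> V -> R[i]) :
  hilbert ip ->
  (forall T : V -> V, bounded_op ip T -> left_invertible ip T ->
    let Ts := adj ip T in
    let Q := opinv ip (Ts \o T) in
    let T' := cdual ip T in
    let c1 := forall x : V, hnorm ip (T' (Ts x)) <= hnorm ip (T' (T x)) in
    let c2 := op_le ip (T \o Q \o Ts) (Ts \o Q \o T) in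
    let c3 := op_le ip (orth_proj ip (oprange T)) (Ts \o Q \o T) in
    let c4 := hyponormal_on ip (oprange T') T' in
    [/\ c1 <-> c2, c2 <-> c3 & c3 <-> c4]) /\
  (forall T : V -> V, bounded_op ip T -> concave ip T -> weakly_concave ip T).
Proof.
case=> Hip Hc; split.
- move=> T bT hLI; exact: (part1 Hip Hc bT hLI).
- move=> T bT hconc; exact: (part2 Hip Hc bT hconc).
Qed.
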